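(* For any $f\in\mathcal{C}(I)$ and integers $l,m\ge0$, $\operatorname{dist}\big(f,\mathcal{R}^\alpha_{l,m}(I)\big)\le\operatorname{dist}\big(f,\mathcal{R}_{l,m}(I)\big)$.
   Context: $I=[x_0,x_N]$ is a compact interval, $\mathcal{C}(I)$ the real continuous functions with sup norm, $\Delta=\{x_0<x_1<\dots<x_N\}$, $N\ge2$, a fixed partition, $I_i=[x_{i-1},x_i]$, $L_i(x)=a_ix+b_i$ the affine map of $I$ onto $I_i$ with $L_i(x_0)=x_{i-1}$, $L_i(x_N)=x_i$; $\alpha\in(-1,1)^N$ fixed. For $f,b\in\mathcal{C}(I)$ with $b(x_0)=f(x_0)$, $b(x_N)=f(x_N)$, $f^\alpha_{\Delta,b}$ is the unique $g\in\mathcal{C}(I)$ with $g(x)=f(x)+\alpha_i(g-b)(L_i^{-1}(x))$ for $x\in I_i$. $B_n$ is the Bernstein operator $B_nf(x)=\sum_{k=0}^n f\big(x_0+\tfrac kn(x_N-x_0)\big)\binom nk\frac{(x-x_0)^k(x_N-x)^{n-k}}{(x_N-x_0)^n}$, and $\mathcal{F}^\alpha_{\Delta,B_n}(f)=f^\alpha_{\Delta,B_nf}$. $\mathcal{P}_k(I)$ = real algebraic polynomials of degree $\le k$; $\mathcal{R}_{l,m}(I)=\{p/q:p\in\mathcal{P}_l(I),q\in\mathcal{P}_m(I),q>0\text{ on }I\}$; $\mathcal{R}^\alpha_{l,m}(I)=\{\mathcal{F}^\alpha_{\Delta,B_n}(r):r\in\mathcal{R}_{l,m}(I),n\in\mathbb{N}\}$;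 $\operatorname{dist}(f,S)=\inf\{\|f-s\|_\infty:s\in S\}$. *)

(* Defs.v *)
From Stdlib Require Import Reals Lra ClassicalEpsilon.
Open Scope R_scope.

(* Supremum / infimum of a set of reals, chosen classically
   (arbitrary value if no least upper bound exists). *)
Definition Rsup (P : R -> Prop) : R := epsilon (inhabits 0) (is_lub P).
Definition Rinf (P : R -> Prop) : R := - Rsup (fun y => P (- y)).

Section Setting.

(* continuity on the compact interval [a,b] (functions R -> R, values outside
   [a,b] are irrelevant) *)
Definition cont_on (a b : R) (f : R -> R) : Prop :=
  forall x, a <= x <= b -> forall eps, 0 < eps ->
    exists delta, 0 < delta /\
      forall y, a <= y <= b -> Rabs (y - x) < delta -> Rabs (f y - f x) < eps.

Definition sup_norm (a b : R) (g : R -> R) : R :=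
  Rsup (fun y => exists x, a <= x <= b /\ y = Rabs (g x)).

Definition dist_to (a b : R) (f : R -> R) (S : (R -> R) -> Prop) : R :=
  Rinf (fun d => exists s, S s /\ d = sup_norm a b (fun x => f x - s x)).

End Setting.

Definition is_partition (x : nat -> R) (N : nat) : Prop :=
  (2 <= N)%nat /\ forall i, (i < N)%nat -> x i < x (S i).

(* L_i^{-1} : I_i -> I, inverse of L_i(t) = a_i t + b_i with
   L_i(x_0) = x_{i-1}, L_i(x_N) = x_i. *)
Definition Linv (x : nat -> R) (N i : nat) (t : R) : R :=
  x 0%nat + (t - x (i - 1)%nat) * (x N - x 0%nat) / (x i - x (i - 1)%nat).

Definition is_fractal (x : nat -> R) (N : nat) (alpha : nat -> R)
  (f b g : R -> R) : Prop :=
  cont_on (x 0%nat) (x N) g /\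
  forall i, (1 <= i <= N)%nat -> forall t, x (i - 1)%nat <= t <= x i ->
    g t = f t + alpha i * (g (Linv x N i t) - b (Linv x N i t)).

Definition fractal (x : nat -> R) (N : nat) (alpha : nat -> R)
  (f b : R -> R) : R -> R :=
  epsilon (inhabits (fun _ => 0)) (is_fractal x N alpha f b).

Definition bernstein (a b : R) (n : nat) (f : R -> R) (t : R) : R :=
  sum_f_R0 (fun k => f (a + INR k / INR n * (b - a)) * C n k
                     * (t - a) ^ k * (b - t) ^ (n - k) / (b - a) ^ n) n.

Definition fractal_bernstein (x : nat -> R) (N : nat) (alpha : nat -> R)
  (n : nat) (f : R -> R) : R -> R :=
  fractal x N alpha f (bernstein (x 0%nat) (x N) n f).

Definition is_poly (k : nat) (p : R -> R) : Prop :=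
  exists c : nat -> R, forall t, p t = sum_f_R0 (fun j => c j * t ^ j) k.

Definition rat_class (a b : R) (l m : nat) (r : R -> R) : Prop :=
  exists p q, is_poly l p /\ is_poly m q /\
    (forall t, a <= t <= b -> 0 < q t) /\ r = (fun t => p t / q t).

Definition frat_class (x : nat -> R) (N : nat) (alpha : nat -> R)
  (l m : nat) (s : R -> R) : Prop :=
  exists r n, rat_class (x 0%nat) (x N) l m r /\ (1 <= n)%nat /\
    s = fractal_bernstein x N alpha n r.

(* Main.v *)
Require Import Defs.
From Stdlib Require Import Reals.
From Stdlib Require Import Lra Lia ClassicalEpsilon FunctionalExtensionality.
Open Scope R_scope.

Lemma Rsup_spec (P : R -> Prop) : (exists y, P y) -> (exists M, forall y, P y -> y <= M) ->
  is_lub P (Rsup P).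
Proof.
  intros Hne [M HM]. unfold Rsup. apply epsilon_spec.
  destruct (completeness P) as [m Hm]; [exists M; exact HM| exact Hne|]. now exists m.
Qed.

Lemma sup_norm_spec a b g c : a <= b -> (forall x, a <= x <= b -> Rabs (g x) <= c) ->
  (forall x, a <= x <= b -> Rabs (g x) <= sup_norm a b g) /\ sup_norm a b g <= c
  /\ 0 <= sup_norm a b g.
Proof.
  intros Hab Hc.
  assert (H := Rsup_spec (fun y => exists x, a <= x <= b /\ y = Rabs (g x))).
  destruct H as [H1 H2].
  - exists (Rabs (g a)); exists a; split; [lra|reflexivity].
  - exists c; intros y [x [Hx ->]]; auto.
  - assert (Hub : forall x, a <= x <= b -> Rabs (g x) <= sup_norm a b g).
    { intros x Hx. apply H1. exists x; auto. }
    split; [exact Hub|split].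
    + apply H2. intros y [x [Hx ->]]; auto.
    + apply Rle_trans with (Rabs (g a)); [apply Rabs_pos| apply Hub; lra].
Qed.

Lemma Rinf_spec (P : R -> Prop) : (exists d, P d) -> (forall d, P d -> 0 <= d) ->
  (forall d, P d -> Rinf P <= d) /\ (forall c, (forall d, P d -> c <= d) -> c <= Rinf P).
Proof.
  intros [d0 Hd0] Hpos. unfold Rinf.
  destruct (Rsup_spec (fun y => P (- y))) as [H1 H2].
  - exists (- d0). now rewrite Ropp_involutive.
  - exists 0. intros y Hy. specialize (Hpos _ Hy). lra.
  - split.
    + intros d Hd. assert (- d <= Rsup (fun y => P (- y))).
      { apply H1. now rewrite Ropp_involutive. } lra.
    + intros c Hc. assert (Rsup (fun y => P (- y)) <= - c).
      { apply H2. intros y Hy. specialize (Hc _ Hy). lra. } lra.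
Qed.

Definition clamp (a b t : R) := Rmax a (Rmin b t).

Lemma clamp_in a b t : a <= b -> a <= clamp a b t <= b.
Proof. intros. unfold clamp, Rmax, Rmin. repeat destruct Rle_dec; lra. Qed.

Lemma clamp_id a b t : a <= t <= b -> clamp a b t = t.
Proof. intros. unfold clamp, Rmax, Rmin. repeat destruct Rle_dec; lra. Qed.

Lemma clamp_lip a b s t : a <= b -> Rabs (clamp a b s - clamp a b t) <= Rabs (s - t).
Proof. intros. unfold clamp, Rmax, Rmin. repeat destruct Rle_dec; unfold Rabs;
  repeat destruct Rcase_abs; lra. Qed.

Lemma cpt_cont_on a b g : (forall x, a <= x <= b -> continuity_pt g x) -> cont_on a b g.
Proof.
  intros H x Hx eps Heps.
  destruct (H x Hx eps Heps) as [alp [Halp Hal]].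
  exists alp; split; [exact Halp|]. intros y Hy Hyx.
  destruct (Req_dec y x) as [->|Hne].
  - rewrite Rminus_eq_0, Rabs_R0; exact Heps.
  - apply (Hal y). split; [split; [exact I| auto] | exact Hyx].
Qed.

Lemma cont_on_cpt a b g : a <= b -> cont_on a b g ->
  forall x, continuity_pt (fun t => g (clamp a b t)) x.
Proof.
  intros Hab H x eps Heps.
  destruct (H (clamp a b x) (clamp_in a b x Hab) eps Heps) as [d [Hd Hdd]].
  exists d; split; [exact Hd|]. intros y [_ Hy].
  simpl in *. unfold R_dist in *. apply Hdd; [apply clamp_in; exact Hab|].
  eapply Rle_lt_trans; [apply clamp_lip; exact Hab| exact Hy].
Qed.

Lemma cont_on_ext a b g h : (forall x, a <= x <= b -> g x = h x) -> cont_on a b g -> cont_on a b h.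
Proof.
  intros He H x Hx eps Heps. destruct (H x Hx eps Heps) as [d [Hd Hdd]].
  exists d; split; auto. intros y Hy Hyx. rewrite <- !He by auto. auto.
Qed.

Lemma cont_on_iff a b g : a <= b -> cont_on a b g <->
  forall x, continuity_pt (fun t => g (clamp a b t)) x.
Proof.
  intros Hab; split; [apply cont_on_cpt; auto|].
  intros H. apply cont_on_ext with (fun t => g (clamp a b t)).
  - intros; now rewrite clamp_id.
  - apply cpt_cont_on; auto.
Qed.

Lemma cont_bounded a b g : a <= b -> cont_on a b g -> exists M, forall x, a <= x <= b -> Rabs (g x) <= M.
Proof.
  intros Hab H.
  destruct (continuity_ab_maj (fun t => Rabs (g (clamp a b t))) a b Hab) as [Mx [HM _]].
  - intros c _. apply (continuity_pt_comp (fun t => g (clamp a b t)) Rabs).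
    + apply cont_on_cpt; auto.
    + apply Rcontinuity_abs.
  - exists (Rabs (g (clamp a b Mx))). intros x Hx. specialize (HM x Hx).
    rewrite clamp_id in HM; auto.
Qed.

Lemma cont_on_unif a b g : a <= b -> cont_on a b g -> forall eps, 0 < eps ->
  exists d, 0 < d /\ forall x y, a <= x <= b -> a <= y <= b -> Rabs (x - y) < d -> Rabs (g x - g y) < eps.
Proof.
  intros Hab H eps Heps.
  destruct (Heine (fun t => g (clamp a b t)) (fun c => a <= c <= b) (compact_P3 a b)
     (fun x _ => cont_on_cpt a b g Hab H x) (mkposreal eps Heps)) as [d Hd].
  exists d; split; [apply cond_pos|]. intros x y Hx Hy Hxy.
  specialize (Hd x y Hx Hy Hxy). rewrite !clamp_id in Hd; auto.
Qed.

Lemma cont_on_plus a b g h : a <= b -> cont_on a b g -> cont_on a b h -> cont_on a b (fun t => g t + h t).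
Proof.
  intros Hab Hg Hh. apply cont_on_iff; auto. intros x.
  apply (continuity_pt_plus (fun t => g (clamp a b t)) (fun t => h (clamp a b t)));
  apply cont_on_cpt; auto.
Qed.
Lemma cont_on_minus a b g h : a <= b -> cont_on a b g -> cont_on a b h -> cont_on a b (fun t => g t - h t).
Proof.
  intros Hab Hg Hh. apply cont_on_iff; auto. intros x.
  apply (continuity_pt_minus (fun t => g (clamp a b t)) (fun t => h (clamp a b t)));
  apply cont_on_cpt; auto.
Qed.
Lemma cont_on_scal a b c g : a <= b -> cont_on a b g -> cont_on a b (fun t => c * g t).
Proof.
  intros Hab Hg. apply cont_on_iff; auto. intros x.
  apply (continuity_pt_scal (fun t => g (clamp a b t))); apply cont_on_cpt; auto.
Qed.

Lemma part_mono x N : is_partition x N -> forall i j, (i <= j <= N)%nat -> x i <= x j.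
Proof.
  intros [_ Hp] i j. induction j as [|j IH]; intros Hij.
  - assert (i = 0%nat) by lia. subst; lra.
  - destruct (Nat.eq_dec i (S j)) as [->|Hne]; [lra|].
    assert (x i <= x j) by (apply IH; lia). assert (x j < x (S j)) by (apply Hp; lia). lra.
Qed.

Lemma part_lt x N : is_partition x N -> forall i j, (i < j <= N)%nat -> x i < x j.
Proof.
  intros Hp i j Hij. destruct Hp as [H2 Hs] eqn:E.
  assert (x i < x (S i)) by (apply Hs; lia).
  assert (x (S i) <= x j) by (apply (part_mono x N Hp); lia). lra.
Qed.

Lemma part_ab x N : is_partition x N -> x 0%nat < x N.
Proof. intros Hp. apply (part_lt x N Hp). destruct Hp; lia. Qed.

Lemma part_piece x N i : is_partition x N -> (1 <= i <= N)%nat ->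
  x 0%nat <= x (i - 1)%nat /\ x (i - 1)%nat < x i /\ x i <= x N.
Proof.
  intros Hp Hi. split; [apply (part_mono x N Hp); lia|]. split.
  - apply (part_lt x N Hp); lia.
  - apply (part_mono x N Hp); lia.
Qed.

Lemma Linv_right x N i : is_partition x N -> (1 <= i <= N)%nat -> Linv x N i (x i) = x N.
Proof.
  intros Hp Hi. destruct (part_piece x N i Hp Hi) as [_ [H _]]. unfold Linv. field. lra.
Qed.

Lemma Linv_left x N i : is_partition x N -> (1 <= i <= N)%nat -> Linv x N i (x (i-1)%nat) = x 0%nat.
Proof.
  intros Hp Hi. destruct (part_piece x N i Hp Hi) as [_ [H _]]. unfold Linv. field. lra.
Qed.

Lemma Linv_range x N i t : is_partition x N -> (1 <= i <= N)%nat -> x (i-1)%nat <= t <= x i ->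
  x 0%nat <= Linv x N i t <= x N.
Proof.
  intros Hp Hi Ht. destruct (part_piece x N i Hp Hi) as [H1 [H2 H3]].
  assert (Hab := part_ab x N Hp).
  unfold Linv. set (p := x (i-1)%nat) in *. set (q := x i) in *.
  set (L := x N - x 0%nat).
  assert (E : (t - p) * L / (q - p) = L * ((t - p) / (q - p))) by (field; lra).
  rewrite E.
  assert (0 <= (t - p) / (q - p) <= 1).
  { split.
    - unfold Rdiv. apply Rmult_le_pos; [lra|]. left; apply Rinv_0_lt_compat; lra.
    - apply Rmult_le_reg_r with (q - p); [lra|]. unfold Rdiv.
      rewrite Rmult_assoc, Rinv_l by lra. lra. }
  unfold L. nra.
Qed.

Lemma Linv_cont x N i t : continuity_pt (Linv x N i) t.
Proof.
  assert (E : Linv x N i = fun t => x 0%nat + (t - x (i-1)%nat) *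
     ((x N - x 0%nat) / (x i - x (i-1)%nat))).
  { apply functional_extensionality; intros s. unfold Linv, Rdiv. ring. }
  rewrite E. reg.
Qed.

Fixpoint fidx (x : nat -> R) (t : R) (i n : nat) : nat :=
  match n with
  | O => i
  | S n' => if Rle_dec t (x i) then i else fidx x t (S i) n'
  end.

Definition idx x N t := fidx x t 1 (N - 1).

Lemma fidx_spec x N t : is_partition x N -> forall n i, (1 <= i)%nat -> (i + n = N)%nat ->
  x (i - 1)%nat <= t -> t <= x N ->
  (1 <= fidx x t i n <= N)%nat /\ x (fidx x t i n - 1)%nat <= t <= x (fidx x t i n).
Proof.
  intros Hp n. induction n as [|n IH]; intros i Hi HiN Hl Hr; simpl.
  - assert (i = N) by lia. subst i. split; [lia| lra].
  - destruct (Rle_dec t (x i)) as [Hle|Hgt].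
    + split; [lia| lra].
    + apply IH; try lia; try lra. replace (S i - 1)%nat with i by lia. lra.
Qed.

Lemma idx_spec x N t : is_partition x N -> x 0%nat <= t <= x N ->
  (1 <= idx x N t <= N)%nat /\ x (idx x N t - 1)%nat <= t <= x (idx x N t).
Proof.
  intros Hp Ht. unfold idx. assert (H2 := proj1 Hp).
  apply fidx_spec; auto; try lia; simpl; lra.
Qed.

Definition Tmap x N alpha (f bb g : R -> R) (t : R) : R :=
  f t + alpha (idx x N t) * (g (Linv x N (idx x N t) t) - bb (Linv x N (idx x N t) t)).

Definition Piece x N alpha (f bb g : R -> R) (i : nat) (t : R) : R :=
  f t + alpha i * (g (Linv x N i t) - bb (Linv x N i t)).

Lemma Tmap_agree x N alpha f bb g : is_partition x N ->
  g (x 0%nat) = bb (x 0%nat) -> g (x N) = bb (x N) ->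
  forall i, (1 <= i <= N)%nat -> forall t, x (i-1)%nat <= t <= x i ->
  Tmap x N alpha f bb g t = Piece x N alpha f bb g i t.
Proof.
  intros Hp Ha Hb i Hi t Ht.
  destruct (part_piece x N i Hp Hi) as [H1 [H2 H3]].
  destruct (idx_spec x N t Hp) as [Hj Hjt]; [lra|].
  unfold Tmap, Piece. set (j := idx x N t) in *.
  destruct (Compare_dec.lt_eq_lt_dec i j) as [[Hlt|Heq]|Hgt].
  - assert (x i <= x (j-1)%nat) by (apply (part_mono x N Hp); lia).
    assert (Et1 : t = x i) by lra. assert (Et2 : t = x (j-1)%nat) by lra.
    assert (E1 : Linv x N i t = x N) by (rewrite Et1; apply Linv_right; auto).
    assert (E2 : Linv x N j t = x 0%nat) by (rewrite Et2; apply Linv_left; auto).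
    rewrite E1, E2, Ha, Hb. ring.
  - rewrite Heq. reflexivity.
  - assert (x j <= x (i-1)%nat) by (apply (part_mono x N Hp); lia).
    assert (Et1 : t = x j) by lra. assert (Et2 : t = x (i-1)%nat) by lra.
    assert (E1 : Linv x N j t = x N) by (rewrite Et1; apply Linv_right; auto).
    assert (E2 : Linv x N i t = x 0%nat) by (rewrite Et2; apply Linv_left; auto).
    rewrite E1, E2, Ha, Hb. ring.
Qed.

Lemma finite_delta (Q : nat -> R -> Prop) :
  (forall j d d', 0 < d' <= d -> Q j d -> Q j d') ->
  forall n, (forall j, (j <= n)%nat -> exists d, 0 < d /\ Q j d) ->
  exists d, 0 < d /\ forall j, (j <= n)%nat -> Q j d.
Proof.
  intros Hmono n. induction n as [|n IH]; intros H.
  - destruct (H 0%nat (le_n 0)) as [d [Hd HQ]]. exists d; split; auto.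
    intros j Hj. replace j with 0%nat by lia. auto.
  - destruct IH as [d1 [Hd1 HQ1]]; [intros; apply H; lia|].
    destruct (H (S n) (le_n _)) as [d2 [Hd2 HQ2]].
    exists (Rmin d1 d2). split; [apply Rmin_pos; auto|].
    intros j Hj. destruct (Nat.eq_dec j (S n)) as [->|Hne].
    + apply Hmono with d2; auto. split; [apply Rmin_pos; auto| apply Rmin_r].
    + apply Hmono with d1; [split; [apply Rmin_pos; auto| apply Rmin_l]| apply HQ1; lia].
Qed.

Lemma Tmap_cont x N alpha f bb g : is_partition x N ->
  cont_on (x 0%nat) (x N) f -> cont_on (x 0%nat) (x N) bb -> cont_on (x 0%nat) (x N) g ->
  g (x 0%nat) = bb (x 0%nat) -> g (x N) = bb (x N) ->
  cont_on (x 0%nat) (x N) (Tmap x N alpha f bb g).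
Proof.
  intros Hp Hf Hbb Hg Ha Hb. set (a := x 0%nat) in *. set (b := x N) in *.
  assert (Hab : a <= b) by (left; apply part_ab; auto).
  intros t Ht eps Heps.
  set (Q := fun j d => forall y, a <= y <= b -> Rabs (y - t) < d -> (1 <= j <= N)%nat ->
       x (j-1)%nat <= y <= x j -> Rabs (Tmap x N alpha f bb g y - Tmap x N alpha f bb g t) < eps).
  destruct (finite_delta Q) with N as [d [Hd HQ]].
  - intros j d0 d' [Hd' Hle] HQ0 y Hy Hyt. apply HQ0; auto. lra.
  - intros j _. destruct (Compare_dec.le_lt_dec 1 j) as [H1j|H1j]; [destruct (Compare_dec.le_lt_dec j N) as [HjN|HjN]|].
    + destruct (part_piece x N j Hp (conj H1j HjN)) as [P1 [P2 P3]].
      destruct (Rlt_dec t (x (j-1)%nat)) as [Hlt|Hnlt].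
      { exists (x (j-1)%nat - t). split; [lra|]. intros y _ Hyt _ Hy.
        exfalso. assert (Rabs (y - t) >= y - t) by (apply Rle_ge, Rle_abs). lra. }
      destruct (Rlt_dec (x j) t) as [Hgt|Hngt].
      { exists (t - x j). split; [lra|]. intros y _ Hyt _ Hy.
        exfalso. assert (Rabs (y - t) >= t - y).
        { rewrite <- Rabs_Ropp. apply Rle_ge. replace (t - y) with (- (y - t)) by ring. apply Rle_abs. }
        lra. }
      set (P' := fun y => f (clamp a b y) + alpha j * (g (clamp a b (Linv x N j y)) - bb (clamp a b (Linv x N j y)))).
      assert (HP' : continuity_pt P' t).
      { unfold P'. apply (continuity_pt_plus (fun y => f (clamp a b y))).
        - apply cont_on_cpt; auto.
        - apply (continuity_pt_scal (fun y => g (clamp a b (Linv x N j y)) - bb (clamp a b (Linv x N j y)))).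
          apply (continuity_pt_minus (fun y => g (clamp a b (Linv x N j y)))).
          + apply (continuity_pt_comp (Linv x N j) (fun s => g (clamp a b s))); [apply Linv_cont|apply cont_on_cpt; auto].
          + apply (continuity_pt_comp (Linv x N j) (fun s => bb (clamp a b s))); [apply Linv_cont|apply cont_on_cpt; auto]. }
      assert (Ht' : x (j-1)%nat <= t <= x j) by lra.
      assert (EP : forall y, x (j-1)%nat <= y <= x j -> Tmap x N alpha f bb g y = P' y).
      { intros y Hy. rewrite (Tmap_agree x N alpha f bb g Hp Ha Hb j (conj H1j HjN) y Hy).
        unfold Piece, P'. assert (HL := Linv_range x N j y Hp (conj H1j HjN) Hy).
        rewrite !(clamp_id a b); try reflexivity; unfold a, b in *; lra. }
      destruct (HP' eps Heps) as [d0 [Hd0 Hdd]]. exists d0. split; auto.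
      intros y Hy Hyt _ Hyj. rewrite (EP y Hyj), (EP t Ht').
      destruct (Req_dec y t) as [->|Hne]. { rewrite Rminus_diag, Rabs_R0; auto. }
      apply (Hdd y). split; [split; [exact I| auto]| exact Hyt].
    + exists 1. split; [lra|]. unfold Q; intros; lia.
    + exists 1. split; [lra|]. unfold Q; intros; lia.
  - exists d. split; auto. intros y Hy Hyt.
    destruct (idx_spec x N y Hp Hy) as [Hj Hjy].
    apply (HQ (idx x N y)); auto. lia.
Qed.

Lemma Tmap_left x N alpha f bb g : is_partition x N -> bb (x 0%nat) = f (x 0%nat) ->
  g (x 0%nat) = bb (x 0%nat) -> g (x N) = bb (x N) ->
  Tmap x N alpha f bb g (x 0%nat) = f (x 0%nat).
Proof.
  intros Hp Hf Ha Hb. assert (H1 : (1 <= 1 <= N)%nat) by (destruct Hp; lia).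
  destruct (part_piece x N 1 Hp H1) as [_ [H2 _]]. simpl in H2.
  rewrite (Tmap_agree x N alpha f bb g Hp Ha Hb 1 H1); [|simpl; lra].
  unfold Piece. replace (x 0%nat) with (x (1-1)%nat) at 2 3 by reflexivity.
  rewrite Linv_left by auto. simpl. rewrite Ha. ring.
Qed.

Lemma Tmap_right x N alpha f bb g : is_partition x N -> bb (x N) = f (x N) ->
  g (x 0%nat) = bb (x 0%nat) -> g (x N) = bb (x N) ->
  Tmap x N alpha f bb g (x N) = f (x N).
Proof.
  intros Hp Hf Ha Hb. assert (H1 : (1 <= N <= N)%nat) by (destruct Hp; lia).
  destruct (part_piece x N N Hp H1) as [_ [H2 _]].
  rewrite (Tmap_agree x N alpha f bb g Hp Ha Hb N H1); [|lra].
  unfold Piece. rewrite Linv_right by auto. rewrite Hb. ring.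
Qed.

Fixpoint amax (alpha : nat -> R) (k : nat) : R :=
  match k with O => 0 | S k' => Rmax (Rabs (alpha (S k'))) (amax alpha k') end.

Lemma amax_ge alpha k : 0 <= amax alpha k /\ forall i, (1 <= i <= k)%nat -> Rabs (alpha i) <= amax alpha k.
Proof.
  induction k as [|k [IH1 IH2]]; simpl.
  - split; [lra| intros; lia].
  - split; [apply Rle_trans with (amax alpha k); auto; apply Rmax_r|].
    intros i Hi. destruct (Nat.eq_dec i (S k)) as [->|Hne]; [apply Rmax_l|].
    apply Rle_trans with (amax alpha k); [apply IH2; lia| apply Rmax_r].
Qed.

Lemma amax_lt1 alpha k : (forall i, (1 <= i <= k)%nat -> -1 < alpha i < 1) -> amax alpha k < 1.
Proof.
  induction k as [|k IH]; intros H; simpl; [lra|].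
  apply Rmax_lub_lt; [|apply IH; intros; apply H; lia].
  destruct (H (S k)) as [H1 H2]; [lia|]. unfold Rabs; destruct Rcase_abs; lra.
Qed.

Lemma Tmap_contr x N alpha f bb g h c : is_partition x N ->
  (forall s, x 0%nat <= s <= x N -> Rabs (g s - h s) <= c) ->
  forall t, x 0%nat <= t <= x N ->
  Rabs (Tmap x N alpha f bb g t - Tmap x N alpha f bb h t) <= amax alpha N * c.
Proof.
  intros Hp Hc t Ht. destruct (idx_spec x N t Hp Ht) as [Hj Hjt].
  unfold Tmap. set (j := idx x N t) in *. set (L := Linv x N j t).
  assert (HL : x 0%nat <= L <= x N) by (apply Linv_range; auto).
  replace (f t + alpha j * (g L - bb L) - (f t + alpha j * (h L - bb L))) with (alpha j * (g L - h L)) by ring.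
  rewrite Rabs_mult. apply Rmult_le_compat; try apply Rabs_pos.
  - apply (proj2 (amax_ge alpha N)); auto.
  - apply Hc; auto.
Qed.

Lemma tri u v w : Rabs (u - w) <= Rabs (u - v) + Rabs (v - w).
Proof. replace (u - w) with ((u - v) + (v - w)) by ring. apply Rabs_triang. Qed.

Lemma Rdiv_le_0_compat u v : 0 <= u -> 0 < v -> 0 <= u / v.
Proof. intros. unfold Rdiv. apply Rmult_le_pos; [lra| left; apply Rinv_0_lt_compat; lra]. Qed.

Lemma small_pow A K : 0 <= A < 1 -> 0 <= K -> forall eps, 0 < eps ->
  exists N0, forall n, (n >= N0)%nat -> K * A ^ n < eps.
Proof.
  intros HA HK eps Heps.
  destruct (pow_lt_1_zero A) with (eps / (K + 1)) as [N0 HN].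
  - rewrite Rabs_pos_eq; lra.
  - apply Rdiv_lt_0_compat; lra.
  - exists N0. intros n Hn. specialize (HN n Hn). rewrite Rabs_pos_eq in HN by (apply pow_le; lra).
    assert (0 <= A ^ n) by (apply pow_le; lra).
    apply Rle_lt_trans with ((K + 1) * A ^ n); [nra|].
    replace eps with ((K + 1) * (eps / (K + 1))) by (field; lra).
    apply Rmult_lt_compat_l; lra.
Qed.

Definition Giter x N alpha (f bb : R -> R) (k : nat) : R -> R :=
  Nat.iter k (Tmap x N alpha f bb) f.

Definition FHyp x N alpha (f bb : R -> R) :=
  is_partition x N /\ (forall i, (1 <= i <= N)%nat -> -1 < alpha i < 1) /\
  cont_on (x 0%nat) (x N) f /\ cont_on (x 0%nat) (x N) bb /\
  bb (x 0%nat) = f (x 0%nat) /\ bb (x N) = f (x N).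

Lemma Giter_inv x N alpha f bb : FHyp x N alpha f bb -> forall k,
  cont_on (x 0%nat) (x N) (Giter x N alpha f bb k) /\
  Giter x N alpha f bb k (x 0%nat) = bb (x 0%nat) /\ Giter x N alpha f bb k (x N) = bb (x N).
Proof.
  intros (Hp & Hal & Hf & Hbb & Ha & Hb) k. induction k as [|k (IH1 & IH2 & IH3)].
  - simpl. auto.
  - change (Giter x N alpha f bb (S k)) with (Tmap x N alpha f bb (Giter x N alpha f bb k)).
    split; [apply Tmap_cont; auto|].
    rewrite Tmap_left, Tmap_right; auto.
Qed.

Lemma amax_prop x N alpha f bb : FHyp x N alpha f bb -> 0 <= amax alpha N < 1.
Proof.
  intros (Hp & Hal & _). split; [apply amax_ge| apply amax_lt1; auto].
Qed.

Lemma Giter_step x N alpha f bb M0 : FHyp x N alpha f bb ->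
  (forall t, x 0%nat <= t <= x N -> Rabs (Giter x N alpha f bb 1 t - Giter x N alpha f bb 0 t) <= M0) ->
  forall k t, x 0%nat <= t <= x N ->
  Rabs (Giter x N alpha f bb (S k) t - Giter x N alpha f bb k t) <= amax alpha N ^ k * M0.
Proof.
  intros HH HM k. induction k as [|k IH]; intros t Ht.
  - simpl pow. rewrite Rmult_1_l. apply HM; auto.
  - change (Giter x N alpha f bb (S (S k))) with (Tmap x N alpha f bb (Giter x N alpha f bb (S k))).
    change (Giter x N alpha f bb (S k)) with (Tmap x N alpha f bb (Giter x N alpha f bb k)) at 2.
    replace (amax alpha N ^ S k * M0) with (amax alpha N * (amax alpha N ^ k * M0)) by (simpl; ring).
    apply Tmap_contr; auto. apply HH.
Qed.

Lemma Giter_cauchy x N alpha f bb M0 : FHyp x N alpha f bb ->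
  (forall t, x 0%nat <= t <= x N -> Rabs (Giter x N alpha f bb 1 t - Giter x N alpha f bb 0 t) <= M0) ->
  forall p k t, x 0%nat <= t <= x N ->
  Rabs (Giter x N alpha f bb (k + p) t - Giter x N alpha f bb k t) <=
    M0 / (1 - amax alpha N) * amax alpha N ^ k * (1 - amax alpha N ^ p).
Proof.
  intros HH HM p. assert (HA := amax_prop x N alpha f bb HH).
  set (A := amax alpha N) in *.
  induction p as [|p IH]; intros k t Ht.
  - rewrite Nat.add_0_r, Rminus_diag, Rabs_R0. simpl. lra.
  - eapply Rle_trans; [apply (tri _ (Giter x N alpha f bb (k + p) t))|].
    rewrite Nat.add_succ_r.
    assert (H1 := Giter_step x N alpha f bb M0 HH HM (k + p) t Ht).
    assert (H2 := IH k t Ht). fold A in H1.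
    rewrite pow_add in H1.
    replace (M0 / (1 - A) * A ^ k * (1 - A ^ S p)) with
      (A ^ k * A ^ p * M0 + M0 / (1 - A) * A ^ k * (1 - A ^ p)) by (simpl; field; lra).
    lra.
Qed.

Lemma Giter_cauchy2 x N alpha f bb M0 : FHyp x N alpha f bb ->
  (forall t, x 0%nat <= t <= x N -> Rabs (Giter x N alpha f bb 1 t - Giter x N alpha f bb 0 t) <= M0) ->
  forall n k t, (k <= n)%nat -> x 0%nat <= t <= x N ->
  Rabs (Giter x N alpha f bb n t - Giter x N alpha f bb k t) <=
    M0 / (1 - amax alpha N) * amax alpha N ^ k.
Proof.
  intros HH HM n k t Hkn Ht. assert (HA := amax_prop x N alpha f bb HH).
  replace n with (k + (n - k))%nat by lia.
  eapply Rle_trans; [apply Giter_cauchy; auto|].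
  assert (0 <= M0).
  { eapply Rle_trans; [apply Rabs_pos| apply (HM (x 0%nat))]. split; [lra|].
    left; apply part_ab, HH. }
  assert (0 <= amax alpha N ^ (n - k)) by (apply pow_le; lra).
  assert (0 <= amax alpha N ^ k) by (apply pow_le; lra).
  assert (0 <= M0 / (1 - amax alpha N)) by (apply Rdiv_le_0_compat; lra).
  assert (0 <= M0 / (1 - amax alpha N) * amax alpha N ^ k) by (apply Rmult_le_pos; auto).
  nra.
Qed.

Definition glim x N alpha f bb (t : R) : R :=
  epsilon (inhabits 0) (fun l => Un_cv (fun k => Giter x N alpha f bb k t) l).

Lemma fractal_exists x N alpha f bb : FHyp x N alpha f bb -> exists g, is_fractal x N alpha f bb g.
Proof.
  intros HH. assert (HA := amax_prop x N alpha f bb HH).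
  destruct HH as (Hp & Hal & Hf & Hbb & Ha & Hb) eqn:EHH.
  assert (Hab : x 0%nat <= x N) by (left; apply part_ab; auto).
  set (A := amax alpha N) in *.
  assert (HGinv := Giter_inv x N alpha f bb HH).
  set (G := Giter x N alpha f bb) in *.
  destruct (cont_bounded (x 0%nat) (x N) (fun t => G 1%nat t - G 0%nat t) Hab) as [M0 HM0].
  { apply cont_on_minus; auto; apply HGinv. }
  assert (HM0' : 0 <= M0) by (eapply Rle_trans; [apply Rabs_pos| apply (HM0 (x 0%nat)); lra]).
  set (C := M0 / (1 - A)).
  assert (HC : 0 <= C) by (apply Rdiv_le_0_compat; lra).
  assert (Hcau : forall n k t, (k <= n)%nat -> x 0%nat <= t <= x N -> Rabs (G n t - G k t) <= C * A ^ k).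
  { intros. apply Giter_cauchy2; auto. }
  set (g := glim x N alpha f bb).
  assert (Hcv : forall t, x 0%nat <= t <= x N -> Un_cv (fun k => G k t) (g t)).
  { intros t Ht. unfold g, glim. apply epsilon_spec.
    destruct (R_complete (fun k => G k t)) as [l Hl]; [|exists l; exact Hl].
    intros eps Heps. destruct (small_pow A (2 * C) (conj (proj1 HA) (proj2 HA))) with eps as [N0 HN0]; [lra|auto|].
    exists N0. intros n m Hn Hm. unfold R_dist.
    eapply Rle_lt_trans; [apply (tri _ (G N0 t))|].
    assert (H1 := Hcau n N0 t Hn Ht). assert (H2 := Hcau m N0 t Hm Ht).
    rewrite <- Rabs_Ropp in H2. replace (- (G m t - G N0 t)) with (G N0 t - G m t) in H2 by ring.
    specialize (HN0 N0 (le_n _)). lra. }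
  assert (Hbnd : forall k t, x 0%nat <= t <= x N -> Rabs (g t - G k t) <= C * A ^ k).
  { intros k t Ht. apply Rle_plus_epsilon. intros eps Heps.
    destruct (Hcv t Ht eps Heps) as [N1 HN1].
    specialize (HN1 (Nat.max N1 k) ltac:(lia)). unfold R_dist in HN1.
    eapply Rle_trans; [apply (tri _ (G (Nat.max N1 k) t))|].
    rewrite <- Rabs_Ropp. replace (- (g t - G (Nat.max N1 k) t)) with (G (Nat.max N1 k) t - g t) by ring.
    assert (H1 := Hcau (Nat.max N1 k) k t ltac:(lia) Ht). lra. }
  exists g. split.
  -
    intros t Ht eps Heps.
    destruct (small_pow A C (conj (proj1 HA) (proj2 HA)) HC (eps / 3)) as [k Hk]; [lra|].
    specialize (Hk k (le_n _)).
    destruct (proj1 (HGinv k) t Ht (eps / 3)) as [d [Hd Hdd]]; [lra|].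
    exists d. split; auto. intros y Hy Hyt.
    specialize (Hdd y Hy Hyt).
    assert (H1 := Hbnd k y Hy). assert (H2 := Hbnd k t Ht).
    eapply Rle_lt_trans; [apply (tri _ (G k y))|].
    eapply Rle_lt_trans; [apply Rplus_le_compat_l, (tri _ (G k t))|].
    rewrite <- (Rabs_Ropp (G k t - g t)). replace (- (G k t - g t)) with (g t - G k t) by ring.
    lra.
  - intros i Hi t Ht.
    destruct (part_piece x N i Hp Hi) as [P1 [P2 P3]].
    assert (HtI : x 0%nat <= t <= x N) by lra.
    set (L := Linv x N i t). assert (HL : x 0%nat <= L <= x N) by (apply Linv_range; auto).
    set (d := g t - (f t + alpha i * (g L - bb L))).
    assert (Hd : Rabs d <= 0).
    { apply Rle_plus_epsilon. intros eps Heps.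
      destruct (small_pow A (2 * C) (conj (proj1 HA) (proj2 HA))) with eps as [k Hk]; [lra|auto|].
      specialize (Hk k (le_n _)).
      assert (E : G (S k) t = Piece x N alpha f bb (G k) i t).
      { change (G (S k)) with (Tmap x N alpha f bb (G k)).
        apply Tmap_agree; auto; apply HGinv. }
      unfold Piece in E. fold L in E.
      assert (H1 := Hbnd (S k) t HtI). assert (H2 := Hbnd k L HL).
      assert (Hai : Rabs (alpha i) <= A) by (apply (proj2 (amax_ge alpha N)); auto).
      assert (HAk : A ^ S k <= A ^ k) by (simpl; assert (0 <= A ^ k) by (apply pow_le; lra); nra).
      unfold d. eapply Rle_trans; [apply (tri _ (G (S k) t))|]. rewrite E. rewrite E in H1.
      replace (f t + alpha i * (G k L - bb L) - (f t + alpha i * (g L - bb L)))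
        with (alpha i * (G k L - g L)) by ring.
      rewrite Rabs_mult. rewrite <- (Rabs_Ropp (G k L - g L)).
      replace (- (G k L - g L)) with (g L - G k L) by ring.
      assert (Rabs (alpha i) * Rabs (g L - G k L) <= 1 * (C * A ^ k)).
      { apply Rmult_le_compat; try apply Rabs_pos; auto. lra. }
      assert (C * A ^ S k <= C * A ^ k) by (apply Rmult_le_compat_l; auto).
      lra. }
    assert (d = 0) by (revert Hd; unfold Rabs; destruct Rcase_abs; lra).
    unfold d in *. lra.
Qed.

Lemma fractal_spec x N alpha f bb : FHyp x N alpha f bb ->
  is_fractal x N alpha f bb (fractal x N alpha f bb).
Proof.
  intros HH. unfold fractal. apply epsilon_spec. apply fractal_exists; auto.
Qed.

Lemma fractal_err x N alpha f bb g E : FHyp x N alpha f bb -> is_fractal x N alpha f bb g ->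
  (forall t, x 0%nat <= t <= x N -> Rabs (f t - bb t) <= E) ->
  forall t, x 0%nat <= t <= x N -> Rabs (g t - f t) <= amax alpha N * E / (1 - amax alpha N).
Proof.
  intros HH [Hg Heq] HE. assert (HA := amax_prop x N alpha f bb HH).
  destruct HH as (Hp & Hal & Hf & Hbb & Ha & Hb).
  assert (Hab : x 0%nat <= x N) by (left; apply part_ab; auto).
  set (A := amax alpha N) in *.
  destruct (cont_bounded _ _ (fun t => g t - f t) Hab) as [M HM]; [apply cont_on_minus; auto|].
  destruct (sup_norm_spec _ _ (fun t => g t - f t) M Hab HM) as [S1 [_ S3]].
  set (D := sup_norm (x 0%nat) (x N) (fun t => g t - f t)) in *.
  assert (HE0 : 0 <= E) by (eapply Rle_trans; [apply Rabs_pos| apply (HE (x 0%nat)); lra]).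
  assert (HD : D <= A * (D + E)).
  { destruct (sup_norm_spec _ _ (fun t => g t - f t) (A * (D + E)) Hab) as [_ [T2 _]]; [|exact T2].
    intros t Ht. destruct (idx_spec x N t Hp Ht) as [Hj Hjt].
    set (j := idx x N t) in *.
    rewrite (Heq j Hj t Hjt).
    set (L := Linv x N j t). assert (HL : x 0%nat <= L <= x N) by (apply Linv_range; auto).
    replace (f t + alpha j * (g L - bb L) - f t) with (alpha j * ((g L - f L) + (f L - bb L))) by ring.
    rewrite Rabs_mult. apply Rmult_le_compat; try apply Rabs_pos.
    - apply (proj2 (amax_ge alpha N)); auto.
    - eapply Rle_trans; [apply Rabs_triang|]. apply Rplus_le_compat; [apply S1| apply HE]; auto. }
  intros t Ht. eapply Rle_trans; [apply S1; auto|].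
  apply Rmult_le_reg_r with (1 - A); [lra|].
  unfold Rdiv. rewrite Rmult_assoc, Rinv_l by lra. nra.
Qed.

Lemma sum_ext (F G : nat -> R) n : (forall k, (k <= n)%nat -> F k = G k) -> sum_f_R0 F n = sum_f_R0 G n.
Proof. apply sum_eq. Qed.

Lemma sum_lin (F G : nat -> R) c1 c2 n :
  sum_f_R0 (fun k => c1 * F k + c2 * G k) n = c1 * sum_f_R0 F n + c2 * sum_f_R0 G n.
Proof. induction n as [|n IH]; simpl; [ring| rewrite IH; ring]. Qed.

Lemma sum_scal (F : nat -> R) c n : sum_f_R0 (fun k => c * F k) n = c * sum_f_R0 F n.
Proof. induction n as [|n IH]; simpl; [ring| rewrite IH; ring]. Qed.

Lemma sum_cont (F : nat -> R -> R) n x : (forall k, continuity_pt (F k) x) ->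
  continuity_pt (fun t => sum_f_R0 (fun k => F k t) n) x.
Proof.
  intros H. induction n as [|n IH]; simpl; [apply H|].
  apply (continuity_pt_plus (fun t => sum_f_R0 (fun k => F k t) n) (F (S n))); auto.
Qed.

Lemma C_n_0' n : C n 0 = 1.
Proof. unfold C. rewrite Nat.sub_0_r. simpl. field. apply INR_fact_neq_0. Qed.

Lemma C_n_n' n : C n n = 1.
Proof. unfold C. rewrite Nat.sub_diag. simpl. field. apply INR_fact_neq_0. Qed.

Lemma C_pos n k : 0 <= C n k.
Proof.
  unfold C. unfold Rdiv. apply Rmult_le_pos; [apply pos_INR|].
  left; apply Rinv_0_lt_compat, Rmult_lt_0_compat; apply INR_fact_lt_0.
Qed.

Lemma C_shift m i : (i <= m)%nat -> INR (S i) * C (S m) (S i) = INR (S m) * C m i.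
Proof.
  intros Hi. unfold C. replace (S m - S i)%nat with (m - i)%nat by lia.
  change (Factorial.fact (S m)) with (S m * Factorial.fact m)%nat. change (Factorial.fact (S i)) with (S i * Factorial.fact i)%nat.
  rewrite !mult_INR. field. split; [apply INR_fact_neq_0|]. split; [apply INR_fact_neq_0|].
  apply not_0_INR. lia.
Qed.

Definition W n u v k := C n k * u ^ k * v ^ (n - k).

Lemma mom0 n u v : sum_f_R0 (W n u v) n = (u + v) ^ n.
Proof. rewrite binomial. reflexivity. Qed.

Lemma mom1_S m u v : sum_f_R0 (fun k => INR k * W (S m) u v k) (S m) = INR (S m) * u * (u + v) ^ m.
Proof.
  rewrite decomp_sum by lia. simpl pred. rewrite Rmult_0_l, Rplus_0_l.
  rewrite (sum_ext _ (fun i => (INR (S m) * u) * W m u v i)).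
  - rewrite sum_scal, mom0. ring.
  - intros k Hk. unfold W. replace (S m - S k)%nat with (m - k)%nat by lia.
    rewrite <- !Rmult_assoc, C_shift by auto. simpl pow. ring.
Qed.

Lemma mom1 n u v : sum_f_R0 (fun k => INR k * W n u v k) n * (u + v) = INR n * u * (u + v) ^ n.
Proof.
  destruct n as [|m]; [simpl; ring|]. rewrite mom1_S. simpl pow. ring.
Qed.

Lemma mom2_S m u v : sum_f_R0 (fun k => INR k * INR k * W (S m) u v k) (S m) * (u + v) =
  INR (S m) * u * (INR m * u * (u + v) ^ m + (u + v) ^ S m).
Proof.
  rewrite decomp_sum by lia. simpl pred. rewrite !Rmult_0_l, Rplus_0_l.
  rewrite (sum_ext _ (fun i => (INR (S m) * u) * (INR i * W m u v i) + (INR (S m) * u) * W m u v i)).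
  - rewrite sum_lin, mom0. rewrite <- (mom1 m u v). simpl pow. ring.
  - intros k Hk. unfold W. replace (S m - S k)%nat with (m - k)%nat by lia.
    replace (INR (S k) * INR (S k) * (C (S m) (S k) * u ^ S k * v ^ (m - k)))
      with (INR (S k) * (INR (S k) * C (S m) (S k)) * u ^ S k * v ^ (m - k)) by ring.
    rewrite C_shift by auto. rewrite S_INR. simpl pow. ring.
Qed.

Lemma variance n u v : (1 <= n)%nat -> 0 < u + v ->
  sum_f_R0 (fun k => (INR k / INR n * (u + v) - u) ^ 2 * W n u v k) n = u * v / INR n * (u + v) ^ n.
Proof.
  intros Hn HL. destruct n as [|m]; [lia|].
  assert (Hn0 : INR (S m) <> 0) by (apply not_0_INR; lia).
  rewrite (sum_ext _ (fun k => 1 * (((u + v) / INR (S m)) ^ 2 * (INR k * INR k * W (S m) u v k) +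
     (- 2 * u * ((u + v) / INR (S m))) * (INR k * W (S m) u v k)) + u ^ 2 * W (S m) u v k)).
  2: { intros k _. cbv beta. unfold Rdiv. ring. }
  rewrite sum_lin, Rmult_1_l, sum_lin, mom0.
  assert (E2 := mom2_S m u v). assert (E1 := mom1 (S m) u v).
  revert E2 E1.
  generalize (sum_f_R0 (fun k => INR k * INR k * W (S m) u v k) (S m)) as S2.
  generalize (sum_f_R0 (fun k => INR k * W (S m) u v k) (S m)) as S1.
  intros S1 S2 E2 E1.
  assert (HL0 : u + v <> 0) by lra.
  assert (E2' : S2 = INR (S m) * u * (INR m * u * (u + v) ^ m + (u + v) ^ S m) / (u + v)).
  { apply Rmult_eq_reg_r with (u + v); auto. rewrite E2. field. auto. }
  assert (E1' : S1 = INR (S m) * u * (u + v) ^ S m / (u + v)).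
  { apply Rmult_eq_reg_r with (u + v); auto. rewrite E1. field. auto. }
  rewrite E2', E1'. rewrite S_INR in *. simpl pow. field. auto.
Qed.

Lemma bern_w_sum a b n t : a < b ->
  sum_f_R0 (fun k => W n (t - a) (b - t) k / (b - a) ^ n) n = 1.
Proof.
  intros Hab. assert (Hp : (b - a) ^ n <> 0) by (apply pow_nonzero; lra).
  rewrite (sum_ext _ (fun k => / (b - a) ^ n * W n (t - a) (b - t) k)).
  2: { intros k _. unfold Rdiv. ring. }
  rewrite sum_scal, mom0. replace (t - a + (b - t)) with (b - a) by ring. field. auto.
Qed.

Lemma bern_diff a b n h t : a < b ->
  bernstein a b n h t - h t = sum_f_R0 (fun k => (h (a + INR k / INR n * (b - a)) - h t) *
     (W n (t - a) (b - t) k / (b - a) ^ n)) n.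
Proof.
  intros Hab. assert (Hp : (b - a) ^ n <> 0) by (apply pow_nonzero; lra).
  rewrite (sum_ext _ (fun k => 1 * (h (a + INR k / INR n * (b - a)) * (W n (t - a) (b - t) k / (b - a) ^ n))
     + (- h t) * (W n (t - a) (b - t) k / (b - a) ^ n))).
  2: { intros k _. cbv beta. ring. }
  rewrite sum_lin, bern_w_sum by auto. unfold bernstein.
  rewrite (sum_ext _ (fun k => h (a + INR k / INR n * (b - a)) * (W n (t - a) (b - t) k / (b - a) ^ n))).
  - ring.
  - intros k _. unfold W. field. auto.
Qed.

Lemma pt_bound (h : R -> R) M d e s t : Rabs (h s) <= M -> Rabs (h t) <= M -> 0 < d ->
  (Rabs (s - t) < d -> Rabs (h s - h t) < e) -> 0 <= e ->
  Rabs (h s - h t) <= e + 2 * M / d ^ 2 * (s - t) ^ 2.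
Proof.
  intros Hs Ht Hd Hc He.
  assert (HM : 0 <= M) by (eapply Rle_trans; [apply Rabs_pos| exact Hs]).
  assert (Hd2 : 0 < d ^ 2) by (apply pow_lt; auto).
  assert (Hq : 2 * M / d ^ 2 * (s - t) ^ 2 = 2 * M * ((s - t) ^ 2 / d ^ 2)) by (field; lra).
  assert (Hq0 : 0 <= (s - t) ^ 2 / d ^ 2).
  { unfold Rdiv. apply Rmult_le_pos; [apply pow2_ge_0| left; apply Rinv_0_lt_compat; auto]. }
  rewrite Hq. destruct (Rlt_dec (Rabs (s - t)) d) as [Hlt|Hge].
  - specialize (Hc Hlt). assert (0 <= 2 * M * ((s - t) ^ 2 / d ^ 2)) by (apply Rmult_le_pos; lra). lra.
  - assert (Hge' : d <= Rabs (s - t)) by lra.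
    assert (H2 : d ^ 2 <= (s - t) ^ 2).
    { rewrite <- (pow2_abs (s - t)). apply pow_incr. lra. }
    assert (H1 : 1 <= (s - t) ^ 2 / d ^ 2).
    { apply Rmult_le_reg_r with (d ^ 2); auto. unfold Rdiv. rewrite Rmult_assoc, Rinv_l by lra. lra. }
    assert (Rabs (h s - h t) <= Rabs (h s) + Rabs (h t)).
    { unfold Rminus. eapply Rle_trans; [apply Rabs_triang| rewrite Rabs_Ropp; lra]. }
    nra.
Qed.

Lemma bern_conv a b h : a < b -> cont_on a b h -> forall eps, 0 < eps ->
  exists n, (1 <= n)%nat /\ forall t, a <= t <= b -> Rabs (bernstein a b n h t - h t) <= eps.
Proof.
  intros Hab Hh eps Heps.
  destruct (cont_bounded a b h) as [M HM]; [lra| auto|].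
  destruct (cont_on_unif a b h) with (eps / 2) as [d [Hd Hdd]]; [lra|auto|lra|].
  assert (HM0 : 0 <= M) by (eapply Rle_trans; [apply Rabs_pos| apply (HM a); lra]).
  set (K := 2 * M / d ^ 2).
  assert (HK : 0 <= K).
  { unfold K, Rdiv. apply Rmult_le_pos; [lra| left; apply Rinv_0_lt_compat, pow_lt; auto]. }
  destruct (INR_archimed (eps / 2) (K * (b - a) ^ 2)) as [n0 Hn0]; [lra|].
  exists (S n0). split; [lia|]. intros t Ht.
  set (n := S n0) in *.
  assert (Hn : 0 < INR n) by (apply lt_0_INR; unfold n; lia).
  assert (HnS : INR n0 <= INR n) by (apply le_INR; unfold n; lia).
  assert (Hp : 0 < (b - a) ^ n) by (apply pow_lt; lra).
  rewrite bern_diff by auto.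
  eapply Rle_trans; [apply Rsum_abs|].
  eapply Rle_trans.
  { apply (sum_Rle _ (fun k => (eps / 2) * (W n (t - a) (b - t) k / (b - a) ^ n) +
        K * ((INR k / INR n * ((t - a) + (b - t)) - (t - a)) ^ 2 * W n (t - a) (b - t) k / (b - a) ^ n))).
    intros k Hk.
    assert (Hw : 0 <= W n (t - a) (b - t) k / (b - a) ^ n).
    { unfold W, Rdiv. apply Rmult_le_pos; [|left; apply Rinv_0_lt_compat; auto].
      apply Rmult_le_pos; [apply Rmult_le_pos; [apply C_pos| apply pow_le; lra]| apply pow_le; lra]. }
    assert (Hkn : 0 <= INR k / INR n <= 1).
    { split.
      - unfold Rdiv. apply Rmult_le_pos; [apply pos_INR| left; apply Rinv_0_lt_compat; auto].
      - apply Rmult_le_reg_r with (INR n); auto. unfold Rdiv. rewrite Rmult_assoc, Rinv_l by lra.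
        assert (INR k <= INR n) by (apply le_INR; auto). lra. }
    set (s := a + INR k / INR n * (b - a)).
    assert (Hs : a <= s <= b) by (unfold s; nra).
    rewrite Rabs_mult, (Rabs_pos_eq (W _ _ _ _ / _)) by auto.
    assert (HB := pt_bound h M d (eps / 2) s t (HM s Hs) (HM t Ht) Hd (Hdd s t Hs Ht) ltac:(lra)).
    replace (INR k / INR n * (t - a + (b - t)) - (t - a)) with (s - t) by (unfold s; ring).
    fold K in HB.
    replace (eps / 2 * (W n (t - a) (b - t) k / (b - a) ^ n) +
      K * ((s - t) ^ 2 * W n (t - a) (b - t) k / (b - a) ^ n)) with
      ((eps / 2 + K * (s - t) ^ 2) * (W n (t - a) (b - t) k / (b - a) ^ n)) by (field; lra).
    apply Rmult_le_compat_r; auto. }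
  rewrite sum_lin, bern_w_sum by auto.
  rewrite (sum_ext _ (fun k => / (b - a) ^ n * ((INR k / INR n * ((t - a) + (b - t)) - (t - a)) ^ 2 * W n (t - a) (b - t) k))).
  2: { intros k _. unfold Rdiv. ring. }
  rewrite sum_scal, variance by (unfold n; lia || lra).
  replace (t - a + (b - t)) with (b - a) by ring.
  replace (/ (b - a) ^ n * ((t - a) * (b - t) / INR n * (b - a) ^ n)) with ((t - a) * (b - t) / INR n) by (field; lra).
  assert (Huv : (t - a) * (b - t) <= (b - a) ^ 2) by nra.
  assert (K * ((t - a) * (b - t) / INR n) <= K * ((b - a) ^ 2 / INR n)).
  { apply Rmult_le_compat_l; auto. unfold Rdiv. apply Rmult_le_compat_r; [left; apply Rinv_0_lt_compat; auto| auto]. }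
  assert (K * ((b - a) ^ 2 / INR n) <= eps / 2).
  { apply Rmult_le_reg_r with (INR n); auto. replace (K * ((b - a) ^ 2 / INR n) * INR n) with (K * (b - a) ^ 2) by (field; lra).
    nra. }
  lra.
Qed.

Lemma bern_a a b n h : a < b -> (1 <= n)%nat -> bernstein a b n h a = h a.
Proof.
  intros Hab Hn. unfold bernstein. rewrite decomp_sum by lia.
  rewrite sum_eq_R0.
  - assert (INR n <> 0) by (apply not_0_INR; lia).
    assert ((b - a) ^ n <> 0) by (apply pow_nonzero; lra).
    rewrite C_n_0', Nat.sub_0_r. simpl INR. replace (a + 0 / INR n * (b - a)) with a by (field; auto).
    field. auto.
  - intros k _. rewrite Rminus_diag, pow_i by lia. unfold Rdiv. ring.
Qed.

Lemma bern_b a b n h : a < b -> (1 <= n)%nat -> bernstein a b n h b = h b.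
Proof.
  intros Hab Hn. unfold bernstein. destruct n as [|m]; [lia|]. rewrite tech5.
  rewrite sum_eq_R0.
  - assert (INR (S m) <> 0) by (apply not_0_INR; lia).
    assert ((b - a) ^ S m <> 0) by (apply pow_nonzero; lra).
    rewrite C_n_n', Nat.sub_diag. replace (a + INR (S m) / INR (S m) * (b - a)) with b by (field; auto).
    field. auto.
  - intros k Hk. rewrite Rminus_diag, (pow_i (S m - k)) by lia. unfold Rdiv. ring.
Qed.

Lemma bern_cont a b n h x : continuity_pt (bernstein a b n h) x.
Proof.
  unfold bernstein.
  apply (sum_cont (fun k t => h (a + INR k / INR n * (b - a)) * C n k * (t - a) ^ k * (b - t) ^ (n - k) / (b - a) ^ n)).
  intros k. reg.
Qed.

Lemma poly_cont k p x : is_poly k p -> continuity_pt p x.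
Proof.
  intros [c Hc].
  assert (E : p = fun t => sum_f_R0 (fun j => c j * t ^ j) k) by (apply functional_extensionality; auto).
  rewrite E. apply (sum_cont (fun j t => c j * t ^ j)). intros j. reg.
Qed.

Lemma rat_cont a b l m r : rat_class a b l m r -> cont_on a b r.
Proof.
  intros [p [q [Hp [Hq [Hpos ->]]]]]. apply cpt_cont_on. intros x Hx.
  apply (continuity_pt_div p q x); [eapply poly_cont; eauto| eapply poly_cont; eauto|].
  specialize (Hpos x Hx). lra.
Qed.

Lemma rat_zero a b l m : rat_class a b l m (fun t => (fun _ : R => 0) t / (fun _ : R => 1) t).
Proof.
  exists (fun _ => 0), (fun _ => 1). split; [|split; [|split]]; auto.
  - exists (fun _ => 0). intros t. symmetry. apply sum_eq_R0. intros; ring.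
  - exists (fun j => match j with O => 1 | _ => 0 end). intros t. induction m as [|m IH].
    + simpl. ring.
    + rewrite tech5, <- IH. ring.
  - intros; lra.
Qed.

Lemma fhyp_rat x N alpha l m r n : is_partition x N ->
  (forall i, (1 <= i <= N)%nat -> -1 < alpha i < 1) ->
  rat_class (x 0%nat) (x N) l m r -> (1 <= n)%nat ->
  FHyp x N alpha r (bernstein (x 0%nat) (x N) n r).
Proof.
  intros Hp Hal Hr Hn. assert (Hab := part_ab x N Hp).
  split; [auto|split; [auto|split; [eapply rat_cont; eauto|split]]].
  - apply cpt_cont_on. intros; apply bern_cont.
  - split; [apply bern_a| apply bern_b]; auto.
Qed.

Lemma frat_cont x N alpha l m s : is_partition x N ->
  (forall i, (1 <= i <= N)%nat -> -1 < alpha i < 1) ->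
  frat_class x N alpha l m s -> cont_on (x 0%nat) (x N) s.
Proof.
  intros Hp Hal [r [n [Hr [Hn ->]]]].
  apply (fractal_spec x N alpha r (bernstein (x 0%nat) (x N) n r)).
  apply fhyp_rat with l m; auto.
Qed.

Lemma approx x N alpha l m r : is_partition x N ->
  (forall i, (1 <= i <= N)%nat -> -1 < alpha i < 1) ->
  rat_class (x 0%nat) (x N) l m r -> forall eps, 0 < eps ->
  exists s, frat_class x N alpha l m s /\
    forall t, x 0%nat <= t <= x N -> Rabs (s t - r t) <= eps.
Proof.
  intros Hp Hal Hr eps Heps. assert (Hab := part_ab x N Hp).
  assert (HA : 0 <= amax alpha N < 1) by (split; [apply amax_ge| apply amax_lt1; auto]).
  set (A := amax alpha N) in *.
  destruct (bern_conv (x 0%nat) (x N) r Hab (rat_cont _ _ l m r Hr) (eps * (1 - A))) as [n [Hn Hb]].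
  { apply Rmult_lt_0_compat; lra. }
  exists (fractal_bernstein x N alpha n r). split.
  - exists r, n. auto.
  - intros t Ht. unfold fractal_bernstein.
    assert (HH := fhyp_rat x N alpha l m r n Hp Hal Hr Hn).
    eapply Rle_trans.
    + apply (fractal_err x N alpha r _ _ (eps * (1 - A)) HH (fractal_spec _ _ _ _ _ HH)); auto.
      intros s Hs. rewrite Rabs_minus_sym. auto.
    + fold A. replace (A * (eps * (1 - A)) / (1 - A)) with (A * eps) by (field; lra). nra.
Qed.

Lemma dist_spec a b f g : a <= b -> cont_on a b f -> cont_on a b g ->
  (forall t, a <= t <= b -> Rabs (f t - g t) <= sup_norm a b (fun t => f t - g t)) /\
  0 <= sup_norm a b (fun t => f t - g t).
Proof.
  intros Hab Hf Hg.
  destruct (cont_bounded a b (fun t => f t - g t) Hab) as [M HM]; [apply cont_on_minus; auto|].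
  destruct (sup_norm_spec a b _ M Hab HM) as [H1 [_ H3]]. auto.
Qed.

Theorem theorem3p9 (x : nat -> R) (N : nat) (alpha : nat -> R)
  (Hpart : is_partition x N)
  (Halpha : forall i, (1 <= i <= N)%nat -> -1 < alpha i < 1)
  (f : R -> R) (Hf : cont_on (x 0%nat) (x N) f) (l m : nat) :
  dist_to (x 0%nat) (x N) f (frat_class x N alpha l m)
  <= dist_to (x 0%nat) (x N) f (rat_class (x 0%nat) (x N) l m).
Proof.
  assert (Hab : x 0%nat <= x N) by (left; apply part_ab; auto).
  unfold dist_to.
  destruct (Rinf_spec (fun d => exists s, rat_class (x 0%nat) (x N) l m s /\
      d = sup_norm (x 0%nat) (x N) (fun t => f t - s t))) as [_ HR2].
  { eexists. eexists. split; [apply rat_zero| reflexivity]. }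
  { intros d [s [Hs ->]]. apply dist_spec; auto. eapply rat_cont; eauto. }
  destruct (Rinf_spec (fun d => exists s, frat_class x N alpha l m s /\
      d = sup_norm (x 0%nat) (x N) (fun t => f t - s t))) as [HF1 _].
  { destruct (approx x N alpha l m _ Hpart Halpha (rat_zero (x 0%nat) (x N) l m) 1) as [s [Hs _]]; [lra|].
    eexists. exists s. split; [exact Hs| reflexivity]. }
  { intros d [s [Hs ->]]. apply dist_spec; auto. eapply frat_cont; eauto. }
  apply HR2. intros d [r [Hr ->]].
  apply Rle_plus_epsilon. intros eps Heps.
  destruct (approx x N alpha l m r Hpart Halpha Hr eps Heps) as [s [Hs Hsr]].
  eapply Rle_trans; [apply HF1; exists s; split; [exact Hs| reflexivity]|].
  destruct (dist_spec (x 0%nat) (x N) f r Hab Hf (rat_cont _ _ l m r Hr)) as [D1 _].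
  destruct (sup_norm_spec (x 0%nat) (x N) (fun t => f t - s t)
     (sup_norm (x 0%nat) (x N) (fun t => f t - r t) + eps) Hab) as [_ [H _]]; [|exact H].
  intros t Ht. eapply Rle_trans; [apply (tri _ (r t))|].
  specialize (D1 t Ht). specialize (Hsr t Ht). rewrite Rabs_minus_sym in Hsr. lra.
Qed.
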